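(* Let $FAF=\langle\mathcal A,\rho\rangle$ be a fuzzy argumentation framework and $E\subseteq\mathcal A$. For every $C\subseteq\mathcal A$: $E=GE(FAF,C)$ if and only if for every $S\in SCCS_{FAF}$, $$E\cap S=GE\big(FAF\downarrow_{R_{FAF}(S,E)},\,D_{FAF}(S,E)\cap C\big).$$
   Context: Fuzzy sets: a fuzzy set on a crisp set $X$ is a map $S:X\to[0,1]$; $S\subseteq S'$ means $S(x)\le S'(x)$ for all $x$; $\cap,\cup$ are pointwise $\min,\max$; $\mathrm{Supp}(S)=\{x:S(x)>0\}$. A fuzzy point $(x,a)$, $a\in(0,1]$, has value $a$ at $x$ and $0$ elsewhere; $(x,a)\in S$ means $a\le S(x)$. $a*b=\min\{a,b\}$. A fuzzy argumentation framework (FAF) is $\langle\mathcal A,\rho\rangle$ with $\mathrm{Args}$ a crisp set, $\mathcal A$ a fuzzy set on $\mathrm{Args}$, $\rho:\mathrm{Args}\times\mathrm{Args}\to[0,1]$, $\rho_{AB}=\rho(A,B)$; $A$ attacks $B$ iff $\rho_{AB}>0$. Fuzzy arguments are fuzzy points $(A,a)\in\mathcal A$. An attack of $(A,a)$ on $(B,b)$ is tolerable if $\min\{a,\rho_{AB}\}+b\le1$, sufficient otherwise. $(A,a)$ weakens $(B,b)$ to $(B,b')$, $b'=\min\{1-\min\{a,\rho_{AB}\},b\}$. $T\subseteq\mathcal A$ weakening defends $(C,c)$ (i.e. $(C,c)$ is acceptable w.r.t. $T$) if for every fuzzy argument $(B,b)$ sufficiently attacking $(C,c)$ there is $(A',a')\in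 T$ weakening $(B,b)$ to some $(B,b')$ which tolerably attacks $(C,c)$. For $C\subseteq\mathcal A$, the characteristic function of $FAF$ in $C$ maps $T\subseteq C$ to $F_{FAF,C}(T)$, the union of all fuzzy arguments $(A,a)\in C$ that are weakening defended by $T$; the grounded extension of $FAF$ in $C$, $GE(FAF,C)$, is the least fixed point of $F_{FAF,C}$ with respect to $\subseteq$. Path-equivalence on $\mathrm{Args}$: $A\sim B$ iff $A=B$ or there are chains of attacks from $A$ to $B$ and from $B$ to $A$. $SCC_{FAF}(A)$ is the fuzzy set with value $\mathcal A(B)$ at each $B\sim A$, $0$ elsewhere; $SCCS_{FAF}$ is the set of these. $outparents_{FAF}(S)$ is the fuzzy set of $(B,\mathcal A(B))$ with $B\notin\mathrm{Supp}(S)$ attacking some argument of $\mathrm{Supp}(S)$. For $T\subseteq\mathcal A$, $FAF\downarrow_T=\langle T,\rho|_{\mathrm{Supp}(T)\times\mathrm{Supp}(T)}\rangle$, and notions in $FAF\downarrow_T$ refer to its own fuzzy arguments and attacks. For $E\subseteq\mathcal A$, $S\in SCCS_{FAF}$: $L_{FAF}(S,E)(A)=\max_B\big((E\cap outparents_{FAF}(S))(B)*\rho_{BA}\big)$ for $A\in\mathrm{Supp}(S)$, $0$ elsewhere; $R_{FAF}(S,E)(A)=\min\{\mathcal A(A),1-L_{FAF}(S,E)(A)\}$ for $A\in\mathrm{Supp}(S)$, $0$ elsewhere; $D_{FAF}(S,E)$ is the union of fuzzy points $(A,a)\in R_{FAF}(S,E)$ such that for every $(B,b)\in outparents_{FAF}(S)$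 sufficiently attacking $(A,a)$ there is $(C,c)\in E$ weakening $(B,b)$ to some $(B,b')$ which tolerably attacks $(A,a)$. *)

(* Defs.v *)
From HB Require Import structures.
From mathcomp Require Import all_boot all_order all_algebra.
From mathcomp Require Import boolp classical_sets reals.
Set Implicit Arguments. Unset Strict Implicit. Unset Printing Implicit Defensive.
Import Order.TTheory GRing.Theory Num.Theory.
Local Open Scope ring_scope.
Local Open Scope classical_set_scope.

Section FuzzyArgumentation.
Variables (R : realType) (Args : finType).

Definition fuzzyset := Args -> R.

Definition is_fuzzy (S : fuzzyset) : Prop := forall x, 0 <= S x <= 1.

Definition fsubset (S S' : fuzzyset) : Prop := forall x, S x <= S' x.
Definition fsame (S S' : fuzzyset) : Prop := forall x, S x = S' x.
Definition fcap (S S' : fuzzyset) : fuzzyset := fun x => Num.min (S x) (S' x).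
Definition supp (S : fuzzyset) : pred Args := fun x => 0 < S x.

Definition fpoint_in (S : fuzzyset) (x : Args) (a : R) : Prop :=
  0 < a /\ a <= 1 /\ a <= S x.

(* Union of all fuzzy points (x,a) satisfying P x a (value 0 if there is none). *)
Definition union_pts (P : Args -> R -> Prop) : fuzzyset :=
  fun x => sup [set a | P x a].

Record faf := FAF { fargs : fuzzyset; frho : Args -> Args -> R }.

Definition wf_faf (X : faf) : Prop :=
  is_fuzzy (fargs X) /\ forall x y, 0 <= frho X x y <= 1.

Definition attacks (X : faf) (A B : Args) : bool := 0 < frho X A B.

Definition farg (X : faf) (A : Args) (a : R) : Prop := fpoint_in (fargs X) A a.

Definition tolerable (X : faf) (A : Args) (a : R) (B : Args) (b : R) : Prop :=
  Num.min a (frho X A B) + b <= 1.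
Definition sufficient (X : faf) (A : Args) (a : R) (B : Args) (b : R) : Prop :=
  1 < Num.min a (frho X A B) + b.

Definition weaken (X : faf) (A : Args) (a : R) (B : Args) (b : R) : R :=
  Num.min (1 - Num.min a (frho X A B)) b.

Definition wdefends (X : faf) (T : fuzzyset) (C : Args) (c : R) : Prop :=
  forall B b, farg X B b -> sufficient X B b C c ->
    exists A' a', fpoint_in T A' a' /\ tolerable X B (weaken X A' a' B b) C c.

Definition charfun (X : faf) (Cs T : fuzzyset) : fuzzyset :=
  union_pts (fun A a => fpoint_in Cs A a /\ wdefends X T A a).

Definition is_GE (X : faf) (Cs E : fuzzyset) : Prop :=
  [/\ fsubset E Cs, fsame (charfun X Cs E) E &
      forall T, fsubset T Cs -> fsame (charfun X Cs T) T -> fsubset E T].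

Definition path_equiv (X : faf) (A B : Args) : bool :=
  (A == B) || (connect (attacks X) A B && connect (attacks X) B A).

Definition SCC (X : faf) (A : Args) : fuzzyset :=
  fun B => if path_equiv X A B then fargs X B else 0.

Definition in_SCCS (X : faf) (S : fuzzyset) : Prop := exists A, S = SCC X A.

Definition outparents (X : faf) (S : fuzzyset) : fuzzyset :=
  fun B => if ~~ supp S B && [exists A, supp S A && attacks X B A]
           then fargs X B else 0.

Definition restrict (X : faf) (T : fuzzyset) : faf :=
  FAF T (fun A B => if supp T A && supp T B then frho X A B else 0).

Definition Lset (X : faf) (S E : fuzzyset) : fuzzyset :=
  fun A => if supp S A then
             \big[Num.max/0]_(B : Args)
                Num.min (fcap E (outparents X S) B) (frho X B A)
           else 0.

Definition Rset (X : faf) (S E : fuzzyset) : fuzzyset :=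
  fun A => if supp S A then Num.min (fargs X A) (1 - Lset X S E A) else 0.

Definition Dset (X : faf) (S E : fuzzyset) : fuzzyset :=
  union_pts (fun A a => fpoint_in (Rset X S E) A a /\
    forall B b, fpoint_in (outparents X S) B b -> sufficient X B b A a ->
      exists C c, fpoint_in E C c /\ tolerable X B (weaken X C c B b) A a).

End FuzzyArgumentation.

(* Main.v *)
Require Import Defs.
From HB Require Import structures.
From mathcomp Require Import all_boot all_order all_algebra.
From mathcomp Require Import boolp classical_sets reals.
From mathcomp Require Import lra.
Import Order.TTheory GRing.Theory Num.Theory.
Local Open Scope ring_scope.
Set Implicit Arguments. Unset Strict Implicit. Unset Printing Implicit Defensive.

Ltac mcases := repeat match goal with
 | |- context [Num.min ?x ?y] => case: (leP x y)
 | |- context [Num.max ?x ?y] => case: (leP x y)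
end; intros.

Section Helpers.
Local Open Scope classical_set_scope.
Variables (R : realType) (Args : finType).
Local Notation fz := (fuzzyset R Args).

Definition rho_ok (rho : Args -> Args -> R) := forall x y, 0 <= rho x y <= 1.

Definition ldef (Att : fz) (rho : Args -> Args -> R) (T : fz) (C : Args) (c : R) :=
  forall B, 0 < Att B -> Num.min (Att B) (rho B C) + c <= 1 \/
     exists A', c <= T A' /\ c <= rho A' B.

Lemma def_equiv (X : faf R Args) (Att T : fz) C c :
  rho_ok (frho X) -> 0 < c -> c <= 1 ->
  (forall B b, fpoint_in Att B b -> sufficient X B b C c ->
     exists A' a', fpoint_in T A' a' /\ tolerable X B (weaken X A' a' B b) C c)
  <-> ldef Att (frho X) T C c.
Proof.
move=> hr c0 c1; rewrite /sufficient /tolerable /weaken /fpoint_in; split.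
- move=> H B AttB.
  case: (lerP (Num.min (Att B) (frho X B C) + c) 1) => h; first by left.
  right.
  have /andP[r0 r1] := hr B C.
  have [A' [a' [[a0 [a1 aT]] tol]]] : exists A' a', (0 < a' /\ a' <= 1 /\ a' <= T A') /\
     Num.min (Num.min (1 - Num.min a' (frho X A' B)) (Num.min (Att B) 1)) (frho X B C) + c <= 1.
    apply: H; first by split; [rewrite lt_min AttB ltr01 | split; rewrite ge_min lexx ?orbT].
    by move: h r1; mcases; lra.
  exists A'; have /andP[q0 q1] := hr A' B.
  suff : c <= Num.min a' (frho X A' B).
    by rewrite le_min => /andP[h1 h2]; split=> //; apply: le_trans aT.
  have hb : Num.min (Num.min (Att B) 1) (frho X B C) = Num.min (Att B) (frho X B C).
    by rewrite -minA (min_idPr r1).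
  move: tol; rewrite -minA hb.
  case: (leP (1 - Num.min a' (frho X A' B)) (Num.min (Att B) (frho X B C))) => _; lra.
- move=> H B b [b0 [b1 bB]] suf.
  have /andP[r0 r1] := hr B C.
  have AttB : 0 < Att B by apply: lt_le_trans bB.
  case: (H B AttB) => [h|[A' [h1 h2]]].
    have : Num.min b (frho X B C) <= Num.min (Att B) (frho X B C).
      by rewrite le_min !ge_min bB lexx orbT.
    lra.
  exists A', c; split; first by split.
  have /andP[q0 q1] := hr A' B.
  rewrite (min_idPl h2).
  have : Num.min (Num.min (1 - c) b) (frho X B C) <= 1 - c by rewrite !ge_min lexx.
  lra.
Qed.

Lemma sup_level (P : R -> Prop) (M : R) : (forall c, P c <-> 0 < c /\ c <= M) ->
  0 <= sup [set c | P c] /\ forall c, 0 < c -> (c <= sup [set c | P c] <-> P c).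
Proof.
move=> HP; case: (lerP M 0) => hM.
- have -> : [set c | P c] = set0.
    apply/seteqP; split => x //= /HP [h1 h2]; lra.
  rewrite sup0; split=> // c c0; split => [|/HP]; lra.
- have hs : sup [set c | P c] = M.
    apply/eqP; rewrite eq_le; apply/andP; split.
    + apply: ge_sup; first by exists M; apply/HP; split.
      by move=> x /HP [].
    + apply: ub_le_sup; first by exists M => x /HP [].
      by apply/HP; split.
  rewrite hs; split; [lra| move=> c c0; rewrite HP; tauto].
Qed.

Lemma level_sup (Att T : fz) rho C K : rho_ok rho ->
  0 <= sup [set c | 0 < c /\ c <= 1 /\ c <= K /\ ldef Att rho T C c] /\
  forall c, 0 < c -> (c <= sup [set c | 0 < c /\ c <= 1 /\ c <= K /\ ldef Att rho T C c]
                     <-> 0 < c /\ c <= 1 /\ c <= K /\ ldef Att rho T C c).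
Proof.
move=> hr; apply: sup_level (Num.min 1 (Num.min K (\big[Num.min/1]_B
   (if 0 < Att B then Num.max (1 - Num.min (Att B) (rho B C))
        (\big[Num.max/0]_A' Num.min (T A') (rho A' B)) else 1)))) _ => c.
rewrite !le_min; split.
- move=> [c0 [c1 [cK Hd]]]; rewrite c1 cK; split=> //; apply/bigmin_geP; split=> //.
  move=> B _; case: ifP => // AttB; case: (Hd B AttB) => [h|[A' [h1 h2]]].
    by rewrite le_max; apply/orP; left; lra.
  rewrite le_max; apply/orP; right; apply: (bigmax_sup A') => //.
  by rewrite le_min h1 h2.
- move=> [c0 /andP[-> /andP[-> /bigmin_geP [_ Hb]]]]; do 3!split=> //.
  move=> B AttB; have := Hb B isT; rewrite AttB le_max => /orP[h|h].
    by left; lra.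
  right; apply/not_existsP => Hn.
  have : \big[Num.max/0]_A' Num.min (T A') (rho A' B) < c.
    apply/bigmax_ltP; split=> // A' _; rewrite ltNge; apply/negP.
    by rewrite le_min => /andP[h1 h2]; apply: (Hn A').
  by rewrite ltNge h.
Qed.

Lemma charfun_LC (X : faf R Args) Cs T C : rho_ok (frho X) ->
  0 <= charfun X Cs T C /\ forall c, 0 < c -> (c <= charfun X Cs T C <->
     c <= 1 /\ c <= Cs C /\ ldef (fargs X) (frho X) T C c).
Proof.
move=> hr; rewrite /charfun /union_pts.
rewrite (_ : [set a | fpoint_in Cs C a /\ wdefends X T C a] =
  [set c | 0 < c /\ c <= 1 /\ c <= Cs C /\ ldef (fargs X) (frho X) T C c]).
  have [h1 h2] := level_sup (fargs X) T C (Cs C) hr.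
  split=> // c c0; rewrite h2 //; tauto.
apply/seteqP; split=> a /=.
- move=> [[a0 [a1 aC]] hw]; do 3!split=> //.
  by apply/def_equiv.
- move=> [a0 [a1 [aC hl]]]; split; first by [].
  by apply/(def_equiv _ _ _ hr a0 a1).
Qed.

Lemma Dset_LC (X : faf R Args) S E A : rho_ok (frho X) ->
  0 <= Dset X S E A /\ forall c, 0 < c -> (c <= Dset X S E A <->
     c <= 1 /\ c <= Rset X S E A /\ ldef (outparents X S) (frho X) E A c).
Proof.
move=> hr; rewrite /Dset /union_pts.
rewrite (_ : [set a | _ /\ _] =
  [set c | 0 < c /\ c <= 1 /\ c <= Rset X S E A /\ ldef (outparents X S) (frho X) E A c]).
  have [h1 h2] := level_sup (outparents X S) E A (Rset X S E A) hr.
  split=> // c c0; rewrite h2 //; tauto.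
apply/seteqP; split=> a /=.
- move=> [[a0 [a1 aC]] hw]; do 3!split=> //.
  by apply/def_equiv.
- move=> [a0 [a1 [aC hl]]]; split; first by [].
  by apply/(def_equiv _ _ _ hr a0 a1).
Qed.


Lemma le_levels (u v : R) : 0 <= v -> (forall c, 0 < c -> c <= u -> c <= v) -> u <= v.
Proof.
move=> v0 H; case: (lerP u 0) => hu; first exact: le_trans hu v0.
exact: H.
Qed.

Lemma eq_levels (u v : R) : 0 <= u -> 0 <= v ->
  (forall c, 0 < c -> (c <= u <-> c <= v)) -> u = v.
Proof.
move=> u0 v0 H; apply/eqP; rewrite eq_le; apply/andP; split; apply: le_levels => // c c0.
  by move/H; apply.
by move/(H c c0).
Qed.

Section Fixed.
Variables (X : faf R Args) (Cs : fz).
Hypothesis hr : rho_ok (frho X).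
Hypothesis Cs01 : forall x, 0 <= Cs x <= 1.
Hypothesis hCf : forall x, Cs x <= fargs X x.

Local Notation F := (charfun X Cs).

Lemma F_ge0 T C : 0 <= F T C.
Proof. by case: (charfun_LC Cs T C hr). Qed.

Lemma F_leCs T C : F T C <= Cs C.
Proof.
apply: le_levels; first by case/andP: (Cs01 C).
move=> c c0; case: (charfun_LC Cs T C hr) => _ h /(h c c0); tauto.
Qed.

Lemma F_mono T T' : (forall x, T x <= T' x) -> forall C, F T C <= F T' C.
Proof.
move=> hT C; apply: le_levels; first exact: F_ge0.
move=> c c0; case: (charfun_LC Cs T C hr) => _ h; case: (charfun_LC Cs T' C hr) => _ h'.
rewrite h // h' // => -[c1 [cC hd]]; do 2!split=> //.
move=> B hB; case: (hd B hB) => [l|[A' [h1 h2]]]; first by left.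
by right; exists A'; split=> //; apply: le_trans (hT A').
Qed.

Lemma F_lip T e C : 0 <= e -> F T C - e <= F (fun x => T x - e) C.
Proof.
move=> e0; case: (lerP (F T C - e) 0) => h; first exact: le_trans h (F_ge0 _ _).
have v0 : 0 < F T C by lra.
case: (charfun_LC Cs T C hr) => _ hl; case: (charfun_LC Cs (fun x => T x - e) C hr) => _ hl'.
rewrite hl' //; have := le_refl (F T C); rewrite {1}hl // => -[c1 [cC hd]].
split; first lra. split; first lra.
move=> B hB; case: (hd B hB) => [l|[A' [h1 h2]]]; first by left; lra.
by right; exists A'; split; lra.
Qed.

Definition cfree (U : fz) := forall x y, Num.min (U x) (frho X x y) + U y <= 1.

Lemma cf_step U : (forall x, U x <= Cs x) -> cfree U -> cfree (F U).
Proof.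
move=> UC cU x y; rewrite leNgt; apply/negP => hc.
have /andP[rxy0 rxy1] := hr x y.
have Fx1 : F U x <= 1 by apply: le_trans (F_leCs _ _) _; case/andP: (Cs01 x).
have c1 : F U y <= 1 by apply: le_trans (F_leCs _ _) _; case/andP: (Cs01 y).
have c0 : 0 < F U y by move: hc rxy1 Fx1; mcases; lra.
have c'0 : 0 < F U x by move: hc c1; mcases; lra.
case: (charfun_LC Cs U y hr) => _ hl.
have := le_refl (F U y); rewrite {1}hl // => -[_ [_ hd]].
have fx : 0 < fargs X x by apply: lt_le_trans c'0 (le_trans (F_leCs _ _) (hCf x)).
case: (hd x fx) => [h|[z [zc zr]]].
  by move: h hc (le_trans (F_leCs U x) (hCf x)); mcases; lra.
case: (charfun_LC Cs U x hr) => _ hl'.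
have := le_refl (F U x); rewrite {1}hl' // => -[_ [_ hd']].
have fz0 : 0 < fargs X z by apply: lt_le_trans c0 (le_trans zc (le_trans (UC z) (hCf z))).
have /andP[rzx0 rzx1] := hr z x.
case: (hd' z fz0) => [h|[w [wc wr]]].
  by move: h hc zc zr (le_trans (UC z) (hCf z)); mcases; lra.
have := cU w z.
by move: hc zc zr wc wr; mcases; lra.
Qed.

Definition iterF n : fz := iter n F (fun _ => 0).

Lemma it_bounds n x : 0 <= iterF n x <= Cs x.
Proof.
case: n => [|n] /=; last by rewrite F_ge0 F_leCs.
by rewrite lexx; case/andP: (Cs01 x).
Qed.

Lemma it_succ n x : iterF n x <= iterF n.+1 x.
Proof.
elim: n x => [|n IH] x /=; first exact: F_ge0.
by apply: F_mono => y; apply: IH.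
Qed.

Lemma it_mono m n x : (m <= n)%N -> iterF m x <= iterF n x.
Proof.
elim: n => [|n IH]; first by rewrite leqn0 => /eqP ->.
rewrite leq_eqVlt => /orP[/eqP -> //|]; rewrite ltnS => /IH h.
exact: le_trans h (it_succ _ _).
Qed.

Lemma it_cf n : cfree (iterF n).
Proof.
elim: n => [|n IH] /=.
  by move=> x y; have /andP[r0 r1] := hr x y; mcases; lra.
apply: cf_step => // x; by case/andP: (it_bounds n x).
Qed.

Definition G : fz := fun x => sup (range (fun n => iterF n x)).

Lemma G_hassup x : has_sup (range (fun n => iterF n x)).
Proof.
split; first by exists (iterF 0 x), 0%N.
exists (Cs x) => v [n _ <-]; by case/andP: (it_bounds n x).
Qed.

Lemma it_le_G n x : iterF n x <= G x.
Proof. by apply: sup_upper_bound (G_hassup x) _ _; exists n. Qed.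

Lemma G_ub x v : (forall n, iterF n x <= v) -> G x <= v.
Proof.
move=> h; apply: ge_sup; first by exists (iterF 0 x), 0%N.
by move=> w [n _ <-].
Qed.

Lemma G_bounds x : 0 <= G x <= Cs x.
Proof.
apply/andP; split; first by apply: le_trans (it_le_G 0 x); rewrite /= lexx.
by apply: G_ub => n; case/andP: (it_bounds n x).
Qed.

Lemma G_approx e : 0 < e -> exists N, forall x, G x - e < iterF N x.
Proof.
move=> e0.
have : forall x, exists n, G x - e < iterF n x.
  move=> x; have [v [n _ <-] h] := sup_adherent e0 (G_hassup x).
  by exists n.
move/choice => [nf hnf]; exists (\max_x nf x)%N => x.
apply: lt_le_trans (hnf x) _; apply: it_mono; exact: leq_bigmax.
Qed.

Lemma G_fix x : F G x = G x.
Proof.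
apply/eqP; rewrite eq_le; apply/andP; split.
- apply/ler_addgt0Pr => e e0.
  have [N hN] := G_approx e0.
  have h1 := F_lip G x (ltW e0).
  have h2 : F (fun y => G y - e) x <= F (iterF N) x.
    by apply: F_mono => y; apply: ltW; apply: hN.
  have h3 : F (iterF N) x <= G x by apply: (it_le_G N.+1).
  lra.
- apply: G_ub => n; apply: le_trans (it_succ n x) _.
  by apply: F_mono => y; apply: it_le_G.
Qed.

Lemma G_least T : (forall x, T x <= Cs x) -> (forall x, F T x <= T x) ->
  forall x, G x <= T x.
Proof.
move=> TC FT x; apply: G_ub => n; elim: n x => [|n IH] x /=.
  exact: le_trans (F_ge0 _ _) (FT x).
apply: le_trans (FT x); exact: F_mono.
Qed.

Lemma G_cf : cfree G.
Proof.
move=> x y; rewrite leNgt; apply/negP => hc.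
set d := Num.min (G x) (frho X x y) + G y - 1.
have d0 : 0 < d / 2 by rewrite /d; lra.
have [N hN] := G_approx d0.
have := it_cf N x y; have := hN x; have := hN y; rewrite /d.
by move: hc; mcases; lra.
Qed.

Lemma GE_eqG E : is_GE X Cs E -> forall x, E x = G x.
Proof.
case=> EC Efix Emin x; apply/eqP; rewrite eq_le; apply/andP; split.
- apply: Emin; first by move=> y; case/andP: (G_bounds y).
  exact: G_fix.
- apply: G_least => //; move=> y; rewrite Efix //.
Qed.

Lemma G_GE : is_GE X Cs G.
Proof.
split; first by move=> y; case/andP: (G_bounds y).
  exact: G_fix.
move=> T TC Tfix; apply: G_least => // y; rewrite Tfix //.
Qed.

End Fixed.

Lemma F_leCs_gen (Y : faf R Args) Cs' T C : rho_ok (frho Y) -> 0 <= Cs' C ->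
  charfun Y Cs' T C <= Cs' C.
Proof.
move=> hr' h; apply: le_levels => // c c0.
case: (charfun_LC Cs' T C hr') => _ hl /(hl c c0); tauto.
Qed.

Lemma pe_conn (X : faf R Args) a b :
  path_equiv X a b = connect (attacks X) a b && connect (attacks X) b a.
Proof. by rewrite /path_equiv; case: eqP => [->|] //=; rewrite connect0. Qed.

Section Local.
Variables (X : faf R Args) (Cs E : fz) (A0 : Args).
Hypothesis hr : rho_ok (frho X).
Hypothesis f01 : forall x, 0 <= fargs X x <= 1.
Hypothesis E0 : forall x, 0 <= E x.
Hypothesis Ef : forall x, E x <= fargs X x.
Hypothesis Cs0 : forall x, 0 <= Cs x.
Hypothesis hCf : forall x, Cs x <= fargs X x.
Local Notation S := (SCC X A0).
Local Notation RR := (Rset X S E).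
Local Notation DD := (Dset X S E).
Local Notation OP := (outparents X S).
Local Notation L := (Lset X S E).
Local Notation Y := (restrict X RR).

Lemma suppS x : supp S x = path_equiv X A0 x && (0 < fargs X x).
Proof. by rewrite /supp /SCC; case: ifP => //; rewrite ltxx. Qed.

Lemma S_ge0 x : 0 <= S x.
Proof. by rewrite /SCC; case: ifP => //; case/andP: (f01 x). Qed.

Lemma PL A' B C : supp S A' -> attacks X A' B -> attacks X B C -> supp S C ->
  0 < fargs X B -> supp S B.
Proof.
rewrite !suppS !pe_conn => /andP[/andP[h1 h2] _] aAB aBC /andP[/andP[h3 h4] _] fB.
rewrite fB andbT; apply/andP; split.
  exact: connect_trans h1 (connect1 aAB).
exact: connect_trans (connect1 aBC) h4.
Qed.

Lemma R0 x : 0 < RR x -> supp S x.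
Proof. by rewrite /Rset; case: ifP => //; rewrite ltxx. Qed.

Lemma R_le_f x : RR x <= fargs X x.
Proof.
rewrite /Rset; case: ifP => _; first by rewrite ge_min lexx.
by case/andP: (f01 x).
Qed.

Lemma RS x : supp S x -> RR x = Num.min (fargs X x) (1 - L x).
Proof. by rewrite /Rset => ->. Qed.

Lemma LS x : supp S x ->
  L x = \big[Num.max/0]_B Num.min (Num.min (E B) (OP B)) (frho X B x).
Proof. by rewrite /Lset => ->. Qed.

Lemma OP_ge0 P : 0 <= OP P.
Proof. by rewrite /outparents; case: ifP => //; case/andP: (f01 P). Qed.

Lemma OPpos P : 0 < OP P ->
  [/\ ~~ supp S P, exists2 A, supp S A & attacks X P A & OP P = fargs X P].
Proof.
rewrite /outparents; case: ifP; last by rewrite ltxx.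
by move=> /andP[h1 /existsP[A /andP[h2 h3]]] _; split=> //; exists A.
Qed.

Lemma OPval P A : ~~ supp S P -> supp S A -> attacks X P A -> OP P = fargs X P.
Proof.
move=> h1 h2 h3; rewrite /outparents ifT //; rewrite h1 /=.
by apply/existsP; exists A; rewrite h2 h3.
Qed.

Lemma frhoY a b : frho Y a b = if (0 < RR a) && (0 < RR b) then frho X a b else 0.
Proof. by []. Qed.
Lemma fargsY a : fargs Y a = RR a.
Proof. by []. Qed.

Lemma frhoY_pos a b : 0 < RR a -> 0 < RR b -> frho Y a b = frho X a b.
Proof. by move=> ha hb; rewrite frhoY ha hb. Qed.
Lemma frhoY_neg a b : ~~ (0 < RR a) -> frho Y a b = 0.
Proof. by move/negbTE=> ha; rewrite frhoY ha. Qed.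

Lemma rhoY : rho_ok (frho Y).
Proof. move=> a b /=; case: ifP => _; [exact: hr | by rewrite lexx ler01]. Qed.

Lemma L_exists x c : supp S x -> 0 < c -> c <= L x ->
  exists P, c <= Num.min (Num.min (E P) (OP P)) (frho X P x).
Proof.
move=> Sx c0; rewrite LS // => h; apply/not_existsP => Hn.
have : \big[Num.max/0]_B Num.min (Num.min (E B) (OP B)) (frho X B x) < c.
  apply/bigmax_ltP; split=> // P _; rewrite ltNge; apply/negP => h'.
  exact: (Hn P).
by rewrite ltNge h.
Qed.

Lemma L_ge x P : supp S x -> Num.min (Num.min (E P) (OP P)) (frho X P x) <= L x.
Proof. by move=> Sx; rewrite LS //; apply: (le_bigmax _ _ P). Qed.

Lemma E_le_R x : cfree X E -> supp S x -> E x <= RR x.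
Proof.
move=> cfE Sx; rewrite RS // le_min Ef /=.
have : L x <= 1 - E x; last lra.
rewrite LS //; apply/bigmax_leP; split; first by have := Ef x; case/andP: (f01 x); lra.
move=> P _; have := cfE P x; have := OP_ge0 P; have := Ef x; have := f01 x.
move=> /andP[? ?]; mcases; lra.
Qed.

Lemma LL T T' C c : cfree X E -> (forall x, ~~ supp S x -> T x = E x) ->
  (forall x, supp S x -> T' x = T x) ->
  (forall x, supp S x -> 0 < T x -> 0 < RR x) -> supp S C -> 0 < c ->
  (c <= charfun X Cs T C <-> c <= charfun Y (fcap DD Cs) T' C).
Proof.
move=> cfE H2 H3a H3b SC c0.
case: (charfun_LC Cs T C hr) => _ ->//.
case: (charfun_LC (fcap DD Cs) T' C rhoY) => _ ->//.
case: (Dset_LC S E C hr) => _ hD.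
split.
- move=> [c1 [cC hd]].
  have cR : c <= RR C.
    rewrite RS // le_min (le_trans cC (hCf C)) /=.
    suff : L C <= 1 - c by lra.
    rewrite LS //; apply/bigmax_leP; split; first lra.
    move=> P _.
    case: (lerP (Num.min (Num.min (E P) (OP P)) (frho X P C)) (1 - c)) => // hP; exfalso.
    have OP0 : 0 < OP P by move: hP c1; mcases; have := E0 P; lra.
    case: (OPpos OP0) => nSP _ OPf.
    have fP : 0 < fargs X P by rewrite -OPf.
    have EfP := Ef P.
    case: (hd P fP) => [h|[A' [h1 h2]]].
      by move: h hP EfP; rewrite OPf; mcases; lra.
    have aA'P : attacks X A' P by rewrite /attacks; lra.
    have aPC : attacks X P C by rewrite /attacks; move: hP c1; mcases; lra.
    have nSA' : ~~ supp S A'.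
      by apply/negP => SA'; move: nSP; rewrite (PL SA' aA'P aPC SC fP).
    rewrite H2 // in h1.
    have := cfE A' P.
    by move: hP h1 h2 EfP; rewrite OPf; mcases; lra.
  have cD : c <= DD C.
    apply/(hD c c0); do 2!split=> //.
    move=> B OPB; case: (OPpos OPB) => nSB [A SA aBA] OPf.
    have fB : 0 < fargs X B by rewrite -OPf.
    rewrite OPf; case: (hd B fB) => [h|[A' [h1 h2]]]; first by left.
    right; exists A'; split=> //.
    have aA'B : attacks X A' B by rewrite /attacks; lra.
    have nSA' : ~~ supp S A'.
      by apply/negP => SA'; move: nSB; rewrite (PL SA' aA'B aBA SA fB).
    by rewrite -H2.
  split=> //; split; first by rewrite /fcap le_min cD cC.
  move=> B /= RB; have SB := R0 RB.
  have RC : supp RR C by rewrite /supp; lra.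
  rewrite /supp in RC; rewrite /supp RB RC /=.
  case: (lerP (Num.min (RR B) (frho X B C) + c) 1) => h; first by left.
  right.
  have fB : 0 < fargs X B by apply: lt_le_trans RB (R_le_f B).
  have RBf := R_le_f B.
  case: (hd B fB) => [h'|[A' [h1 h2]]].
    by exfalso; move: h h' RBf; mcases; lra.
  case SA' : (supp S A').
    exists A'; rewrite H3a //; split=> //.
    have RA' : 0 < RR A' by apply: H3b => //; lra.
    by rewrite /supp RA'; exact: h2.
  move/negbT: SA' => SA'; rewrite H2 // in h1.
  exfalso.
  have aA'B : attacks X A' B by rewrite /attacks; lra.
  have OPA' := OPval SA' SB aA'B.
  have hc : c <= L B.
    apply: le_trans (L_ge A' SB); rewrite OPA' !le_min h1 h2 (le_trans h1 (Ef A')).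
    by [].
  rewrite (RS SB) in h.
  have : Num.min (Num.min (fargs X B) (1 - L B)) (frho X B C) <= 1 - L B.
    by rewrite !ge_min lexx orbT.
  lra.
- move=> [c1 [cDC hd']].
  move: cDC; rewrite /fcap le_min => /andP[cD cC].
  have := cD; rewrite hD // => -[_ [cR hdo]].
  split=> //; split=> //.
  move=> B fB.
  case: (lerP (Num.min (fargs X B) (frho X B C) + c) 1) => h; first by left.
  right.
  have aBC : attacks X B C by rewrite /attacks; move: h c1; mcases; lra.
  case SB : (supp S B).
  + case: (lerP (RR B) (1 - c)) => hRB.
    * have cL : c <= L B.
        move: hRB; rewrite (RS SB) ge_min => /orP[h'|h']; last lra.
        have : Num.min (fargs X B) (frho X B C) <= fargs X B by rewrite ge_min lexx.
        lra.
      have [P hP] := L_exists SB c0 cL.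
      move: hP; rewrite !le_min => /andP[/andP[hPE hPO] hPr].
      have OP0 : 0 < OP P by apply: lt_le_trans c0 hPO.
      case: (OPpos OP0) => nSP _ _.
      by exists P; rewrite H2.
    * have RB : 0 < RR B by lra.
      have RC : 0 < RR C by lra.
      case: (hd' B RB) => [h2|[A' [h1 h2]]].
        by move: h2; rewrite fargsY frhoY_pos // => h2; exfalso; move: h2 h hRB; mcases; lra.
      case RA' : (0 < RR A'); last by move: h2; rewrite frhoY_neg ?RA' //; lra.
      have SA' := R0 RA'.
      by exists A'; rewrite -H3a //; move: h2; rewrite frhoY_pos.
  + move/negbT: SB => SB.
    have OPB := OPval SB SC aBC.
    have OP0 : 0 < OP B by rewrite OPB.
    case: (hdo B OP0) => [h2|[A' [h1 h2]]].
      by exfalso; move: h2 h; rewrite OPB; lra.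
    have aA'B : attacks X A' B by rewrite /attacks; lra.
    have nSA' : ~~ supp S A'.
      by apply/negP => SA'; move: SB; rewrite (PL SA' aA'B aBC SC fB).
    by exists A'; rewrite H2.
Qed.

Lemma F'_out T' C : ~~ supp S C -> charfun Y (fcap DD Cs) T' C = 0.
Proof.
move=> nSC; apply/eqP; rewrite eq_le; apply/andP; split; last first.
  by case: (charfun_LC (fcap DD Cs) T' C rhoY).
apply: le_levels => // c c0.
case: (charfun_LC (fcap DD Cs) T' C rhoY) => _ -> // => -[_ [h _]].
move: h; rewrite /fcap le_min => /andP[h _].
case: (Dset_LC S E C hr) => _ hD; move: h; rewrite hD // => -[_ [h _]].
by exfalso; move/negP: nSC; apply; apply: R0; lra.
Qed.


Lemma only_if : (forall x, 0 <= Cs x <= 1) -> is_GE X Cs E ->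
  is_GE Y (fcap DD Cs) (fcap E S).
Proof.
move=> Cs01 hE.
have EG := GE_eqG hr Cs01 hE.
have cfE : cfree X E by move=> x y; rewrite !EG; apply: (G_cf hr Cs01 hCf).
have Efix : forall x, charfun X Cs E x = E x by case: hE.
have EC : forall x, E x <= Cs x by case: hE.
have Eleast : forall T, (forall x, T x <= Cs x) -> (forall x, charfun X Cs T x <= T x) ->
    forall x, E x <= T x.
  by move=> T TC FT x; rewrite EG; apply: G_least.
have ES_in : forall x, supp S x -> fcap E S x = E x.
  move=> x Sx; rewrite /fcap; apply/min_idPl.
  by move: Sx; rewrite suppS /SCC => /andP[-> _].
have ES_out : forall x, ~~ supp S x -> fcap E S x = 0.
  move=> x nSx; rewrite /fcap.
  have S0 : S x = 0.
    by apply/eqP; rewrite eq_le S_ge0 andbT leNgt; move: nSx; rewrite /supp.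
  by rewrite S0; apply/min_idPr.
have DD0 : forall x, 0 <= DD x by move=> x; case: (Dset_LC S E x hr).
have F'0 : forall T x, 0 <= charfun Y (fcap DD Cs) T x.
  by move=> T x; case: (charfun_LC (fcap DD Cs) T x rhoY).
have fixES : forall C, charfun Y (fcap DD Cs) (fcap E S) C = fcap E S C.
  move=> C; case SC : (supp S C); last by rewrite F'_out ?SC // ES_out ?SC.
  apply: eq_levels => //; first by rewrite ES_in.
  move=> c c0; rewrite ES_in // -Efix; symmetry; apply: LL => //.
  by move=> x Sx Ex; apply: lt_le_trans Ex (E_le_R cfE Sx).
split.
- move=> x; rewrite -fixES; apply: F_leCs_gen; first exact: rhoY.
  by rewrite /fcap le_min DD0 Cs0.
- exact: fixES.
move=> T TC Tfix.
have T0 : forall x, 0 <= T x by move=> x; rewrite -Tfix.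
have TR : forall x, 0 < T x -> 0 < RR x.
  move=> x Tx; have : T x <= DD x by apply: le_trans (TC x) _; rewrite /fcap ge_min lexx.
  case: (Dset_LC S E x hr) => _ -> // => -[_ [h _]]; lra.
pose T2 := fun y => if supp S y then Num.min (T y) (E y) else E y.
have T2E : forall x, T2 x <= E x.
  by move=> x; rewrite /T2; case: ifP => _; rewrite ?ge_min lexx ?orbT.
have ET2 : forall x, E x <= T2 x.
  apply: Eleast; first by move=> x; apply: le_trans (T2E x) (EC x).
  move=> x; have h1 : charfun X Cs T2 x <= E x.
    by rewrite -[E x]Efix; apply: (F_mono _ hr).
  rewrite {2}/T2; case Sx : (supp S x) => //.
  rewrite le_min h1 andbT.
  have -> : charfun X Cs T2 x = charfun Y (fcap DD Cs) (fun y => Num.min (T y) (E y)) x.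
    apply: eq_levels; [by case: (charfun_LC Cs T2 x hr)| by [] |].
    move=> c c0; apply: LL => //.
    - by move=> y /negbTE ny; rewrite /T2 ny.
    - by move=> y Sy; rewrite /T2 Sy.
    - move=> y Sy; rewrite /T2 Sy lt_min => /andP[h _]; exact: TR.
  rewrite -[T x]Tfix; apply: (F_mono _ rhoY).
  by move=> y; rewrite ge_min lexx.
move=> x; case Sx : (supp S x).
  rewrite ES_in //; apply: le_trans (ET2 x) _; rewrite /T2 Sx ge_min lexx //.
by rewrite ES_out ?Sx.
Qed.

End Local.
End Helpers.

Section IfDir.
Variables (R : realType) (Args : finType).
Local Notation fz := (fuzzyset R Args).

Lemma GE_unique (Z : faf R Args) (C' A B : fz) :
  is_GE Z C' A -> is_GE Z C' B -> forall x, A x = B x.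
Proof.
move=> [AC Afix Amin] [BC Bfix Bmin] x; apply/eqP; rewrite eq_le Amin // Bmin //.
Qed.

Definition anc (X : faf R Args) x :=
  #|[set y | connect (attacks X) y x && ~~ connect (attacks X) x y]|.

Lemma anc_lt X x y : connect (attacks X) y x -> ~~ connect (attacks X) x y ->
  (anc X y < anc X x)%N.
Proof.
move=> yx nxy; apply: proper_card; apply/properP; split.
- apply/fintype.subsetP => z; rewrite !inE => /andP[zy nyz]; rewrite (connect_trans zy yx) /=.
  apply/negP => xz; move/negP: nyz; apply; exact: connect_trans yx xz.
- by exists y; rewrite !inE ?yx ?nxy ?connect0.
Qed.

End IfDir.

Unset Implicit Arguments.
Set Strict Implicit.

Theorem mainTheorem7 (R : realType) (Args : finType) (X : faf R Args)
    (E : fuzzyset R Args) :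
  wf_faf X -> is_fuzzy E -> fsubset E (fargs X) ->
  forall Cs : fuzzyset R Args, is_fuzzy Cs -> fsubset Cs (fargs X) ->
    (is_GE X Cs E <->
     forall S, in_SCCS X S ->
       is_GE (restrict X (Rset X S E)) (fcap (Dset X S E) Cs) (fcap E S)).
Proof.
move=> [f01 hr] E01 Ef Cs Cs01 hCf.
have E0 : forall x, 0 <= E x by move=> x; case/andP: (E01 x).
have Cs0 : forall x, 0 <= Cs x by move=> x; case/andP: (Cs01 x).
split.
  by move=> hE S [A0 ->]; apply: only_if.
move=> H.
have hG := G_GE hr Cs01.
have G0 : forall x, 0 <= G X Cs x by move=> x; case/andP: (G_bounds hr Cs01 x).
have Gf : forall x, G X Cs x <= fargs X x.
  by move=> x; case/andP: (G_bounds hr Cs01 x) => _ h; apply: le_trans h (hCf x).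
suff EG : forall x, E x = G X Cs x.
  by have -> : E = G X Cs by apply: funext.
suff : forall n x, (anc X x < n)%N -> E x = G X Cs x by move=> h x; apply: (h (anc X x).+1).
elim=> // n IH x; rewrite ltnS => hx.
have zero : forall y, fargs X y <= 0 -> E y = G X Cs y.
  move=> y fy; have := Ef y; have := Gf y; have := E0 y; have := G0 y.
  move=> *; apply/eqP; rewrite eq_le; apply/andP; split; lra.
case: (lerP (fargs X x) 0) => fx; first exact: zero.
have EGy : forall y, (0 < fargs X y -> connect (attacks X) y x /\ ~~ connect (attacks X) x y) ->
    E y = G X Cs y.
  move=> y hy; case: (lerP (fargs X y) 0) => fy; first exact: zero.
  case: (hy fy) => h1 h2; apply: IH; exact: leq_trans (anc_lt h1 h2) hx.
pose S := SCC X x.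
have OPanc : forall B, 0 < outparents X S B -> 0 < fargs X B ->
    connect (attacks X) B x /\ ~~ connect (attacks X) x B.
  move=> B /OPpos [nSB [A SA aBA] _] fB.
  have Ax : connect (attacks X) A x.
    by move: SA; rewrite suppS pe_conn => /andP[/andP[_ ->] _].
  split; first exact: connect_trans (connect1 aBA) Ax.
  apply/negP => xB; move/negP: nSB; apply.
  by rewrite suppS pe_conn xB fB (connect_trans (connect1 aBA) Ax).
have OPanc2 : forall B A', 0 < outparents X S B -> attacks X A' B -> 0 < fargs X A' ->
    connect (attacks X) A' x /\ ~~ connect (attacks X) x A'.
  move=> B A' OPB aAB fA'; have := OPB; move/OPpos => [nSB [A SA aBA] OPf].
  have fB : 0 < fargs X B by rewrite -OPf.
  have [Bx nxB] := OPanc B OPB fB.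
  split; first exact: connect_trans (connect1 aAB) Bx.
  apply/negP => xA'; move/negP: nxB; apply; exact: connect_trans xA' (connect1 aAB).
have LEG : forall y, Lset X S E y = Lset X S (G X Cs) y.
  move=> y; rewrite /Lset; case: ifP => // _; apply: eq_bigr => B _; rewrite /fcap.
  case: (ltrP 0 (outparents X S B)) => hB.
    by rewrite (EGy B) // => fB; apply: OPanc.
  have -> : outparents X S B = 0 by apply/eqP; rewrite eq_le hB OP_ge0.
  by rewrite (min_idPr (E0 B)) (min_idPr (G0 B)).
have REG : Rset X S E = Rset X S (G X Cs).
  by apply: funext => y; rewrite /Rset LEG.
have DEG : Dset X S E = Dset X S (G X Cs).
  apply: funext => y; apply: eq_levels.
  - by case: (Dset_LC S E y hr).
  - by case: (Dset_LC S (G X Cs) y hr).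
  move=> c c0; case: (Dset_LC S E y hr) => _ ->//; case: (Dset_LC S (G X Cs) y hr) => _ ->//.
  rewrite REG; split => -[c1 [cR hd]]; do 2!split=> //; move=> B OPB;
    case: (hd B OPB) => [h|[A' [h1 h2]]]; try by left.
  + right; exists A'; split=> //; rewrite -EGy // => fA'; apply: (OPanc2 B) => //.
    by rewrite /attacks; lra.
  + right; exists A'; split=> //; rewrite EGy // => fA'; apply: (OPanc2 B) => //.
    by rewrite /attacks; lra.
have h1 := H S (ex_intro _ x erefl).
rewrite REG DEG in h1.
have h2 := only_if x hr f01 G0 Gf Cs0 hCf Cs01 hG.
have := GE_unique h1 h2 x.
have Sxx : SCC X x x = fargs X x by rewrite /SCC /path_equiv eqxx.
by rewrite /fcap /S Sxx (min_idPl (Ef x)) (min_idPl (Gf x)).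
Qed.
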